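(* Let $f,g\in\mathbb{R}[x_1,\dots,x_n]$ be forms, where $f$ is nonconstant with strictly positive coefficients and $g(x)>0$ for all $x\in\mathbb{R}_+^n\setminus\{0\}$. If $\deg(f)$ divides $\deg(g)$, then there exists an integer $m\ge1$ such that all coefficients of $f^mg$ are nonnegative.
   Context: A form is a homogeneous polynomial. A form $f=\sum_{|w|=d}a_wx^w$ of degree $d$ has strictly positive coefficients if $a_w>0$ for every $w\in\mathbb{Z}_{\ge0}^n$ with $|w|=d$. $\mathbb{R}_+^n=\{x\in\mathbb{R}^n: x_i\ge0\ \forall i\}$. *)

(* Defs.v *)
From Stdlib Require Import Reals Lra Lia List Arith.
Import ListNotations.
Open Scope R_scope.

(* A polynomial in n variables is represented as a finite list of terms
   (c, w): coefficient c times the monomial x^w, w an exponent vector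
   (a list of naturals of length n).  Repeated exponents are allowed;
   the coefficient of x^w is the sum of all c with exponent w. *)
Definition expo := list nat.
Definition rpoly := list (R * expo).

Definition expo_deg (w : expo) : nat := fold_right Nat.add 0%nat w.

Definition coef (p : rpoly) (w : expo) : R :=
  fold_right (fun t acc =>
    (if list_eq_dec Nat.eq_dec (snd t) w then fst t else 0) + acc) 0 p.

Fixpoint mono_eval (w : expo) (x : list R) : R :=
  match w, x with
  | a :: w', b :: x' => b ^ a * mono_eval w' x'
  | _, _ => 1
  end.

Definition eval (p : rpoly) (x : list R) : R :=
  fold_right (fun t acc => fst t * mono_eval (snd t) x + acc) 0 p.

Fixpoint expo_add (v w : expo) : expo :=
  match v, w with
  | a :: v', b :: w' => (a + b)%nat :: expo_add v' w'
  | [], _ => w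
  | _, [] => v
  end.

Definition pmul (p q : rpoly) : rpoly :=
  flat_map (fun s => map (fun t => (fst s * fst t, expo_add (snd s) (snd t))) q) p.

Definition pone (n : nat) : rpoly := [(1, repeat 0%nat n)].

Fixpoint ppow (n : nat) (p : rpoly) (m : nat) : rpoly :=
  match m with
  | O => pone n
  | S m' => pmul p (ppow n p m')
  end.

Definition is_form (n d : nat) (p : rpoly) : Prop :=
  forall t, In t p -> length (snd t) = n /\ expo_deg (snd t) = d.

Definition nonconstant (n : nat) (p : rpoly) : Prop :=
  exists w, length w = n /\ (1 <= expo_deg w)%nat /\ coef p w <> 0.

Definition strictly_pos_coefs (n d : nat) (p : rpoly) : Prop :=
  forall w, length w = n -> expo_deg w = d -> 0 < coef p w.

Definition in_Rplus_nonzero (n : nat) (x : list R) : Prop :=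
  length x = n /\ Forall (fun a => 0 <= a) x /\ Exists (fun a => a <> 0) x.

Definition nonneg_coefs (p : rpoly) : Prop := forall w, 0 <= coef p w.

(* Main.v *)
Require Import Defs.
From Stdlib Require Import Reals List Arith.
Open Scope R_scope.

Module StdPart.
From Stdlib Require Import Reals Lra Lia List Arith Classical.
From Coquelicot Require Import Coquelicot.
Import ListNotations.
Open Scope R_scope.

Fixpoint toL (n : nat) : Compactness.Tn n R -> list R :=
  match n with
  | O => fun _ => []
  | S k => fun x => fst x :: toL k (snd x)
  end.

Fixpoint ofL (n : nat) (l : list R) : Compactness.Tn n R :=
  match n with
  | O => tt
  | S k => (hd 0 l, ofL k (tl l))
  end.

Fixpoint cstT (n : nat) (c : R) : Compactness.Tn n R :=
  match n with
  | O => tt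
  | S k => (c, cstT k c)
  end.

Lemma toL_ofL n l : length l = n -> toL n (ofL n l) = l.
Proof.
revert l; induction n as [|k IH]; intros l hl; destruct l as [|a l]; simpl in *; try lia; auto.
f_equal; apply IH; lia.
Qed.

Lemma toL_length n x : length (toL n x) = n.
Proof. induction n as [|k IH]; simpl; auto. Qed.

Lemma bounded_toL n x :
  bounded_n n (cstT n 0) (cstT n 1) x <-> List.Forall (fun a => 0 <= a <= 1) (toL n x).
Proof.
induction n as [|k IH]; simpl.
- split; auto.
- destruct x as [x1 x2]; simpl. specialize (IH x2). split.
  + intros [h1 h2]. constructor; [exact h1| apply IH; exact h2].
  + intros h; inversion h; subst. split; [assumption| apply IH; assumption].
Qed.

Lemma close_toL n e x t :
  close_n n e x t -> List.Forall2 (fun a b => Rabs (a - b) < e) (toL n x) (toL n t).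
Proof.
induction n as [|k IH]; simpl; intros h.
- constructor.
- destruct x as [x1 x2], t as [t1 t2]; simpl in *. destruct h. constructor; auto.
Qed.

Definition sumR (l : list R) : R := fold_right Rplus 0 l.

Lemma sum_close l1 l2 e :
  List.Forall2 (fun a b => Rabs (a - b) < e) l1 l2 ->
  Rabs (sumR l1 - sumR l2) <= INR (length l1) * e.
Proof.
induction 1 as [|a b l1 l2 hab _ IH].
- unfold sumR; simpl; rewrite Rminus_0_r, Rabs_R0; lra.
- change (sumR (a :: l1)) with (a + sumR l1). change (sumR (b :: l2)) with (b + sumR l2).
  replace (length (a :: l1)) with (S (length l1)) by reflexivity. rewrite S_INR.
  replace (a + sumR l1 - (b + sumR l2)) with ((a - b) + (sumR l1 - sumR l2)) by ring.
  eapply Rle_trans; [apply Rabs_triang|]. rewrite Rmult_plus_distr_r, Rmult_1_l. lra.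
Qed.

Lemma powle1 a k : 0 <= a <= 1 -> a ^ k <= 1.
Proof.
intros ha; induction k as [|k IH]; simpl; [lra|].
assert (0 <= a ^ k) by (apply pow_le; lra). nra.
Qed.

Lemma pow_lip a b k : 0 <= a <= 1 -> 0 <= b <= 1 -> Rabs (a ^ k - b ^ k) <= INR k * Rabs (a - b).
Proof.
intros ha hb; induction k as [|k IH]; simpl.
- rewrite Rminus_eq_0, Rabs_R0; lra.
- replace (a * a ^ k - b * b ^ k) with (a * (a ^ k - b ^ k) + (a - b) * b ^ k) by ring.
  eapply Rle_trans; [apply Rabs_triang|]. rewrite !Rabs_mult.
  assert (h1 : 0 <= b ^ k <= 1).
  { split; [apply pow_le; lra | apply powle1; lra]. }
  rewrite (Rabs_right (b ^ k)) by lra. rewrite (Rabs_right a) by lra.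
  assert (h2 : 0 <= Rabs (a - b)) by apply Rabs_pos.
  assert (h3 : 0 <= Rabs (a ^ k - b ^ k)) by apply Rabs_pos.
  destruct k as [|k]; simpl INR in *.
  + nra.
  + nra.
Qed.

Lemma mono_bound w x : List.Forall (fun a => 0 <= a <= 1) x -> 0 <= mono_eval w x <= 1.
Proof.
revert x; induction w as [|k w IH]; intros x hx; destruct x as [|a x]; simpl; try lra.
inversion hx as [|? ? hxa hx']; subst. specialize (IH x hx').
assert (0 <= a ^ k <= 1) by (split; [apply pow_le; lra | apply powle1; lra]).
nra.
Qed.

Lemma mono_lip w x t e : 0 <= e ->
  List.Forall (fun a => 0 <= a <= 1) x -> List.Forall (fun a => 0 <= a <= 1) t ->
  List.Forall2 (fun a b => Rabs (a - b) <= e) x t ->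
  Rabs (mono_eval w x - mono_eval w t) <= INR (expo_deg w) * e.
Proof.
intros he; revert x t; induction w as [|k w IH]; intros x t hx ht hc; simpl.
- destruct x, t; rewrite Rminus_eq_0, Rabs_R0; lra.
- inversion hc as [|a b x' t' hab hc']; subst; simpl.
  + rewrite Rminus_eq_0, Rabs_R0. apply Rmult_le_pos; [apply pos_INR| lra].
  + inversion hx as [|? ? hxa hx']; inversion ht as [|? ? hta ht']; subst.
    specialize (IH _ _ hx' ht' hc').
    pose proof (mono_bound w _ hx') as hm1. pose proof (mono_bound w _ ht') as hm2.
    pose proof (pow_lip a b k hxa hta) as hp.
    assert (hbk : 0 <= b ^ k <= 1) by (split; [apply pow_le; lra | apply powle1; lra]).
    replace (a ^ k * mono_eval w x' - b ^ k * mono_eval w t')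
      with ((a ^ k - b ^ k) * mono_eval w x' + b ^ k * (mono_eval w x' - mono_eval w t')) by ring.
    eapply Rle_trans; [apply Rabs_triang|]. rewrite !Rabs_mult.
    rewrite (Rabs_right (mono_eval w x')) by lra. rewrite (Rabs_right (b ^ k)) by lra.
    unfold expo_deg; simpl; fold (expo_deg w). rewrite plus_INR.
    assert (h1 : Rabs (a ^ k - b ^ k) <= INR k * e).
    { eapply Rle_trans; [exact hp|]. apply Rmult_le_compat_l; [apply pos_INR|lra]. }
    assert (0 <= Rabs (a ^ k - b ^ k)) by apply Rabs_pos.
    assert (0 <= Rabs (mono_eval w x' - mono_eval w t')) by apply Rabs_pos.
    nra.
Qed.

Definition lipc (p : rpoly) : R := fold_right (fun t acc => Rabs (fst t) * INR (expo_deg (snd t)) + acc) 0 p.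

Lemma lipc_pos p : 0 <= lipc p.
Proof.
induction p as [|t p IH]; simpl; [lra|].
pose proof (Rabs_pos (fst t)); pose proof (pos_INR (expo_deg (snd t))). nra.
Qed.

Lemma eval_lip p x t e : 0 <= e ->
  List.Forall (fun a => 0 <= a <= 1) x -> List.Forall (fun a => 0 <= a <= 1) t ->
  List.Forall2 (fun a b => Rabs (a - b) <= e) x t ->
  Rabs (eval p x - eval p t) <= lipc p * e.
Proof.
intros he hx ht hc; induction p as [|[c w] p IH]; unfold eval in *; simpl.
- rewrite Rminus_eq_0, Rabs_R0; lra.
- replace (c * mono_eval w x + fold_right (fun t0 acc => fst t0 * mono_eval (snd t0) x + acc) 0 p -
     (c * mono_eval w t + fold_right (fun t0 acc => fst t0 * mono_eval (snd t0) t + acc) 0 p))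
   with (c * (mono_eval w x - mono_eval w t) +
     (fold_right (fun t0 acc => fst t0 * mono_eval (snd t0) x + acc) 0 p -
      fold_right (fun t0 acc => fst t0 * mono_eval (snd t0) t + acc) 0 p)) by ring.
  eapply Rle_trans; [apply Rabs_triang|]. rewrite Rabs_mult.
  pose proof (mono_lip w x t e he hx ht hc).
  pose proof (Rabs_pos c).
  unfold lipc in *; simpl. 
  assert (Rabs c * Rabs (mono_eval w x - mono_eval w t) <= Rabs c * (INR (expo_deg w) * e))
    by (apply Rmult_le_compat_l; lra).
  nra.
Qed.

Lemma le_sumR l : List.Forall (fun a => 0 <= a) l -> List.Forall (fun a => a <= sumR l) l.
Proof.
induction 1 as [|a l ha hl IH]; constructor.
- change (a <= a + sumR l). assert (0 <= sumR l).
  { clear IH; induction hl; unfold sumR; simpl; [lra|]. fold (sumR l). lra. }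
  lra.
- change (List.Forall (fun b => b <= a + sumR l) l).
  eapply Forall_impl; [|exact IH]. intros b hb; simpl in hb. lra.
Qed.

Lemma sum1_exists l : sumR l = 1 -> List.Exists (fun a => a <> 0) l.
Proof.
induction l as [|a l IH]; unfold sumR; simpl; intros h; [lra|].
fold (sumR l) in h. destruct (Req_EM_T a 0) as [e|e].
- apply Exists_cons_tl. apply IH. lra.
- apply Exists_cons_hd. exact e.
Qed.

Definition gauge (n : nat) (g : rpoly) (L : R) (hL : 0 < L) (hn : (0 < INR n)) :
  Compactness.Tn n R -> posreal :=
  fun t =>
  match Rlt_dec 0 (eval g (toL n t)) with
  | left h => mkposreal (eval g (toL n t) / (2 * L))
      (Rdiv_lt_0_compat _ _ h (Rmult_lt_0_compat _ _ Rlt_0_2 hL))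
  | right _ =>
    match Req_EM_T (sumR (toL n t)) 1 with
    | left _ => mkposreal 1 Rlt_0_1
    | right h => mkposreal (Rabs (sumR (toL n t) - 1) / (2 * INR n))
       (Rdiv_lt_0_compat _ _ (Rabs_pos_lt _ (Rminus_eq_contra _ _ h))
          (Rmult_lt_0_compat _ _ Rlt_0_2 hn))
    end
  end.

Lemma unif_pos (n : nat) (g : rpoly) : (1 <= n)%nat ->
  (forall x, in_Rplus_nonzero n x -> 0 < eval g x) ->
  exists eps, 0 < eps /\ forall x, length x = n -> List.Forall (fun a => 0 <= a) x ->
    sumR x = 1 -> eps <= eval g x.
Proof.
intros hn1 hpos.
set (L := lipc g + 1).
assert (hL : 0 < L) by (unfold L; pose proof (lipc_pos g); lra).
assert (hn : 0 < INR n) by (apply lt_0_INR; lia).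
destruct (compactness_value n (cstT n 0) (cstT n 1) (gauge n g L hL hn)) as [d hd].
exists (L * d). split; [apply Rmult_lt_0_compat; [exact hL | apply cond_pos]|].
intros x hlen hnn hsum.
apply Rnot_lt_le; intro hlt.
assert (hbx : bounded_n n (cstT n 0) (cstT n 1) (ofL n x)).
{ apply bounded_toL. rewrite toL_ofL by exact hlen.
  pose proof (le_sumR x hnn) as hle. rewrite hsum in hle.
  clear -hnn hle. induction hnn as [|a l ha hl IH]; constructor.
  - inversion hle; split; assumption.
  - inversion hle; subst. apply IH; assumption. }
apply (hd _ hbx). intros [t [hbt [hct hdt]]].
apply bounded_toL in hbt. apply close_toL in hct.
rewrite toL_ofL in hct by exact hlen.
assert (hbox : List.Forall (fun a => 0 <= a <= 1) x).
{ pose proof (le_sumR x hnn) as hle. rewrite hsum in hle.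
  clear -hnn hle. induction hnn as [|a l ha hl IH]; constructor.
  - inversion hle; split; assumption.
  - inversion hle; subst. apply IH; assumption. }
assert (hweak : forall e, List.Forall2 (fun a b => Rabs (a - b) < e) x (toL n t) ->
                  List.Forall2 (fun a b => Rabs (a - b) <= e) x (toL n t)).
{ intros e h. eapply Forall2_impl; [|exact h]. intros a b hab; simpl in hab; lra. }
unfold gauge in hct, hdt.
destruct (Rlt_dec 0 (eval g (toL n t))) as [hG|hG]; simpl in hct, hdt.
- set (δ := eval g (toL n t) / (2 * L)) in *.
  assert (hδ : 0 <= δ) by (unfold δ; apply Rlt_le, Rdiv_lt_0_compat; [exact hG| lra]).
  pose proof (eval_lip g x (toL n t) δ hδ hbox hbt (hweak _ hct)) as hl.
  assert (h1 : lipc g * δ <= L * δ) by (apply Rmult_le_compat_r; [exact hδ | unfold L; lra]).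
  assert (h2 : eval g (toL n t) = 2 * (L * δ)) by (unfold δ; field; lra).
  assert (h3 : L * d <= L * δ) by (apply Rmult_le_compat_l; lra).
  assert (h4 : eval g (toL n t) - eval g x <= Rabs (eval g x - eval g (toL n t))).
  { rewrite Rabs_minus_sym. apply Rle_abs. }
  lra.
- destruct (Req_EM_T (sumR (toL n t)) 1) as [hS|hS]; simpl in hct, hdt.
  + apply hG, hpos. split; [apply toL_length|]. split.
    * eapply Forall_impl; [|exact hbt]. intros a ha; simpl in ha; lra.
    * apply sum1_exists; exact hS.
  + set (δ := Rabs (sumR (toL n t) - 1) / (2 * INR n)) in *.
    pose proof (sum_close _ _ _ hct) as hs. rewrite hlen, hsum in hs.
    assert (h2 : INR n * δ = Rabs (sumR (toL n t) - 1) / 2) by (unfold δ; field; lra).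
    rewrite h2 in hs. rewrite Rabs_minus_sym in hs.
    assert (0 < Rabs (sumR (toL n t) - 1)) by (apply Rabs_pos_lt; lra).
    lra.
Qed.

End StdPart.

Module MCPart.
From mathcomp Require Import all_boot all_order all_algebra.
From mathcomp Require Import mpoly Rstruct.
From mathcomp Require Import lra ring zify.
Import StdPart.
Set Implicit Arguments. Unset Strict Implicit. Unset Printing Implicit Defensive.
Import Order.TTheory GRing.Theory Num.Theory.
Local Open Scope ring_scope.

Section Gen.
Variable (R : realFieldType) (n : nat).
Local Notation P := {mpoly R[n]}.

Definition nneg (p : P) := forall m, 0 <= p@_m.
Definition hom (D : nat) (p : P) := forall m : 'X_{1..n}, mdeg m != D -> p@_m = 0.

Lemma nnegD p q : nneg p -> nneg q -> nneg (p + q).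
Proof. by move=> hp hq m; rewrite mcoeffD addr_ge0. Qed.

Lemma nnegM p q : nneg p -> nneg q -> nneg (p * q).
Proof.
move=> hp hq m; rewrite mcoeffM; apply: sumr_ge0 => k _; exact: mulr_ge0.
Qed.

Lemma nnegZ c p : 0 <= c -> nneg p -> nneg (c *: p).
Proof. by move=> hc hp m; rewrite mcoeffZ mulr_ge0. Qed.

Lemma nneg1 : nneg 1.
Proof. by move=> m; rewrite mcoeff1 ler0n. Qed.

Lemma nnegX m0 : nneg 'X_[m0].
Proof. by move=> m; rewrite mcoeffX ler0n. Qed.

Lemma nnegXn p k : nneg p -> nneg (p ^+ k).
Proof. by move=> hp; elim: k => [|k ih]; [rewrite expr0; exact: nneg1| rewrite exprS; exact: nnegM]. Qed.

Lemma nneg_sum (I : Type) (r : seq I) (Q : pred I) (F : I -> P) :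
  (forall i, Q i -> nneg (F i)) -> nneg (\sum_(i <- r | Q i) F i).
Proof.
move=> h m; rewrite raddf_sum /=; apply: sumr_ge0 => i /h; exact.
Qed.

Lemma nnegMn p k : nneg p -> nneg (p *+ k).
Proof. by move=> hp m; rewrite mcoeffMn mulrn_wge0. Qed.

Lemma homD D p q : hom D p -> hom D q -> hom D (p + q).
Proof. by move=> hp hq m hm; rewrite mcoeffD hp // hq // addr0. Qed.

Lemma homZ D c p : hom D p -> hom D (c *: p).
Proof. by move=> hp m hm; rewrite mcoeffZ hp // mulr0. Qed.

Lemma homMn D k p : hom D p -> hom D (p *+ k).
Proof. by move=> hp m hm; rewrite mcoeffMn hp // mul0rn. Qed.

Lemma homN D p : hom D p -> hom D (- p).
Proof. by move=> hp m hm; rewrite mcoeffN hp // oppr0. Qed.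

Lemma homM D E p q : hom D p -> hom E q -> hom (D + E) (p * q).
Proof.
move=> hp hq m hm; rewrite mcoeffM big1 // => k /eqP hk.
have : mdeg m = (mdeg k.1 + mdeg k.2)%N by rewrite -mdegD -hk.
case: (eqVneq (mdeg k.1) D) => [h1|h1]; last by rewrite hp // mul0r.
case: (eqVneq (mdeg k.2) E) => [h2|h2]; last by rewrite hq // mulr0.
by move=> e; rewrite e h1 h2 eqxx in hm.
Qed.

Lemma hom1 : hom 0 1.
Proof. move=> m hm; rewrite mcoeff1; case: (eqVneq m 0%MM) hm => [->|]; [by rewrite mdeg0 | by []]. Qed.

Lemma homX m0 : hom (mdeg m0) 'X_[m0].
Proof. move=> m hm; rewrite mcoeffX; case: (eqVneq m0 m) hm => [->|]; [by rewrite eqxx | by []]. Qed.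

Lemma homXn D p k : hom D p -> hom (D * k) (p ^+ k).
Proof.
move=> hp; elim: k => [|k ih]; first by rewrite expr0 muln0; exact: hom1.
rewrite exprS mulnS; exact: homM.
Qed.

Lemma hom_sum D (I : Type) (r : seq I) (Q : pred I) (F : I -> P) :
  (forall i, Q i -> hom D (F i)) -> hom D (\sum_(i <- r | Q i) F i).
Proof.
move=> h m hm; rewrite raddf_sum /=; apply: big1 => i /h; exact.
Qed.

Lemma hom_eq D E p : D = E -> hom D p -> hom E p.
Proof. by move=> ->. Qed.

Definition sP : P := \sum_(i < n) 'X_i.

Lemma nneg_sP : nneg sP.
Proof. apply: nneg_sum => i _; exact: nnegX. Qed.

Lemma hom_sP : hom 1 sP.
Proof. apply: hom_sum => i _; apply: (hom_eq (mdeg1 i)); exact: homX. Qed.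

End Gen.


Section Gen2.
Variable (R : realFieldType) (n : nat).
Local Notation P := {mpoly R[n]}.

Lemma mcoeff_XiM (i : 'I_n) (p : P) m :
  ('X_i * p)@_m = if (0 < m i)%N then p@_(m - U_(i))%MM else 0.
Proof.
rewrite mulrC; case: ifP => h.
  have e : m = (U_(i) + (m - U_(i)))%MM.
    by rewrite addmC submK // lep1mP -lt0n.
  by rewrite {1}e mcoeffMX.
apply/eqP; rewrite mcoeff_eq0; apply/negP => hin.
have := perm_mem (msuppMX p U_(i)) m; rewrite hin => /esym /mapP [m' _ e].
by move: h; rewrite e mnmDE mnm1E eqxx.
Qed.

Lemma mcoeff_sPM (p : P) m :
  (sP R n * p)@_m = \sum_(i < n) (if (0 < m i)%N then p@_(m - U_(i))%MM else 0).
Proof.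
rewrite /sP mulr_suml raddf_sum; apply: eq_bigr => i _; exact: mcoeff_XiM.
Qed.

Definition factm (m : 'X_{1..n}) := (\prod_(i < n) (m i)`!)%N.
Definition ffN (a b : 'X_{1..n}) := (\prod_(i < n) (a i) ^_ (b i))%N.

Lemma factm_gt0 m : (0 < factm m)%N.
Proof. by apply: prodn_gt0 => i; exact: fact_gt0. Qed.

Lemma factm_sub (a : 'X_{1..n}) (i : 'I_n) : (0 < a i)%N -> factm a = (a i * factm (a - U_(i))%MM)%N.
Proof.
move=> h; rewrite /factm (bigD1 i) //= [in RHS](bigD1 i) //= mnmBE mnm1E eqxx.
case e: (a i) h => [//|k] _; rewrite subn1 /= factS mulnA; congr (_ * _)%N.
apply: eq_bigr => j hj; by rewrite mnmBE mnm1E eq_sym (negbTE hj) subn0.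
Qed.

Lemma ff_sub (a b : 'X_{1..n}) (i : 'I_n) :
  (a i * ffN (a - U_(i))%MM b = ffN a b * (a i - b i))%N.
Proof.
rewrite /ffN (bigD1 i) //= [in RHS](bigD1 i) //= mnmBE mnm1E eqxx.
have -> : (\prod_(j < n | j != i) ((a - U_(i))%MM j) ^_ (b j) =
           \prod_(j < n | j != i) (a j) ^_ (b j))%N.
  apply: eq_bigr => j hj; by rewrite mnmBE mnm1E eq_sym (negbTE hj) subn0.
case: (a i) => [|k]; first by rewrite sub0n !muln0 mul0n.
rewrite subn1 /= mulnA -ffactSS ffactnSr.
ring.
Qed.

Lemma le_mdeg_eq (a b : 'X_{1..n}) : (forall i, b i <= a i)%N -> mdeg a = mdeg b -> a = b.
Proof.
move=> hle hd; apply/mnmP => i; apply/eqP; rewrite eqn_leq hle andbT.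
have hs : (\sum_(j < n) (a j - b j) = 0)%N.
  apply/eqP; rewrite -(eqn_add2r (\sum_(j < n) b j)) add0n -big_split /=.
  rewrite -!mdegE -hd mdegE; apply/eqP; apply: eq_bigr => j _; by rewrite subnK.
have : (a i - b i <= \sum_(j < n) (a j - b j))%N.
  by rewrite (bigD1 i) //= leq_addr.
by rewrite hs leqn0 subn_eq0.
Qed.

Lemma sum_ff (a b : 'X_{1..n}) : (mdeg b <= mdeg a)%N ->
  (\sum_(i < n) a i * ffN (a - U_(i))%MM b = ffN a b * (mdeg a - mdeg b))%N.
Proof.
move=> hdeg; rewrite (eq_bigr _ (fun i _ => ff_sub a b i)) -big_distrr /=.
case: (posnP (ffN a b)) => [->|pos]; first by rewrite !mul0n.
congr (_ * _)%N.
have hle : forall i, (b i <= a i)%N.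
  move=> i; rewrite leqNgt; apply/negP => lt; move: pos.
  by rewrite /ffN (bigD1 i) //= ffact_small // mul0n.
apply/eqP; rewrite -(eqn_add2r (mdeg b)) subnK // mdegE -big_split /=.
rewrite mdegE; apply/eqP; apply: eq_bigr => j _; by rewrite subnK.
Qed.

Lemma polya_coef N (b a : 'X_{1..n}) : mdeg a = (N + mdeg b)%N ->
  (sP R n ^+ N * 'X_[b])@_a * (factm a)%:R = (N`! * ffN a b)%:R.
Proof.
elim: N a => [|N ih] a ha.
  rewrite expr0 mul1r mcoeffX fact0 mul1n.
  case: (eqVneq b a) => [->|nab].
    rewrite mul1r /factm /ffN; congr (_%:R); apply: eq_bigr => i _; by rewrite ffactnn.
  rewrite mul0r; case: (boolP [exists i, (a i < b i)%N]) => [/existsP [i hi]|/existsPn h].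
    by rewrite /ffN (bigD1 i) //= ffact_small // mul0n.
  exfalso; move/eqP: nab; apply; apply/esym/le_mdeg_eq => //.
  by move=> i; rewrite leqNgt; apply: h.
rewrite exprS -mulrA mcoeff_sPM mulr_suml factS [(N.+1 * _)%N]mulnC -mulnA.

have hd : (mdeg b <= mdeg a)%N by rewrite ha leq_addl.
have -> : (N.+1 * ffN a b = \sum_(i < n) a i * ffN (a - U_(i))%MM b)%N.
  by rewrite sum_ff // ha addnK mulnC.
rewrite big_distrr /= natr_sum; apply: eq_bigr => i _.
case: ifP => hi.
  rewrite (factm_sub hi) natrM mulrCA ih.
    by rewrite -natrM; congr (_%:R); ring.
  have e : a = ((a - U_(i)) + U_(i))%MM by rewrite submK // lep1mP -lt0n.
  move: ha; rewrite {1}e mdegD mdeg1 addn1 addSn => /eqP; rewrite eqSS => /eqP //.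
have -> : a i = 0%N by apply/eqP; rewrite eqn0Ngt hi.
by rewrite mul0r mul0n muln0.
Qed.

End Gen2.


Section Est.
Variable R : realFieldType.

Lemma prod_le1 (I : Type) (r : seq I) (F : I -> R) :
  (forall i, `|F i| <= 1) -> `|\prod_(i <- r) F i| <= 1.
Proof.
move=> h; elim: r => [|x r ih]; first by rewrite big_nil normr1.
rewrite big_cons normrM; apply: mulr_ile1 => //; exact: normr_ge0.
Qed.

Lemma prod_diff (I : Type) (r : seq I) (F G : I -> R) :
  (forall i, `|F i| <= 1) -> (forall i, `|G i| <= 1) ->
  `|\prod_(i <- r) F i - \prod_(i <- r) G i| <= \sum_(i <- r) `|F i - G i|.
Proof.
move=> hF hG; elim: r => [|x r ih]; first by rewrite !big_nil subrr normr0.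
rewrite !big_cons.
have -> : F x * \prod_(j <- r) F j - G x * \prod_(j <- r) G j =
  F x * (\prod_(j <- r) F j - \prod_(j <- r) G j) + (F x - G x) * \prod_(j <- r) G j.
  by ring.
apply: le_trans (ler_normD _ _) _; rewrite !normrM addrC.
apply: lerD.
  have h1 := prod_le1 r hG.
  have h2 : 0 <= `|F x - G x| by exact: normr_ge0.
  have h3 : 0 <= `|\prod_(j <- r) G j| by exact: normr_ge0.
  by rewrite -[X in _ <= X]mulr1; apply: ler_wpM2l.
have h1 := hF x.
have h2 : 0 <= `|\prod_(j <- r) F j - \prod_(j <- r) G j| by exact: normr_ge0.
apply: le_trans _ ih; rewrite -[X in _ <= X]mul1r; exact: ler_wpM2r.
Qed.

Lemma ffR_nat (x k : nat) : \prod_(j < k) (x%:R - j%:R : R) = (x ^_ k)%:R.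
Proof.
elim: k => [|k ih]; first by rewrite big_ord0.
rewrite big_ord_recr /= ih ffactnSr natrM.
case: (leqP k x) => hk; first by rewrite natrB.
by rewrite ffact_small // !mul0r.
Qed.

End Est.


Section Polya.
Variable (R : archiRealFieldType) (n : nat).
Local Notation P := {mpoly R[n]}.

Lemma mnm_le_mdeg (a : 'X_{1..n}) i : (a i <= mdeg a)%N.
Proof. by rewrite mdegE (bigD1 i) //= leq_addr. Qed.

Lemma U_approx (M : R) (t : 'I_n -> R) (b : 'X_{1..n}) :
  0 < M -> (mdeg b)%:R <= M -> (forall i, 0 <= t i <= 1) ->
  `| \prod_(i < n) \prod_(j < b i) (t i - j%:R / M) - \prod_(i < n) t i ^+ b i |
    <= (mdeg b)%:R * (mdeg b)%:R / M.
Proof.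
move=> hM hbM ht.
have hjM : forall i (j : 'I_(b i)), 0 <= j%:R / M <= 1.
  move=> i j; apply/andP; split; first by rewrite divr_ge0 // ltW.
  rewrite ler_pdivrMr // mul1r; apply: le_trans hbM; rewrite ler_nat.
  exact: leq_trans (ltnW (ltn_ord j)) (mnm_le_mdeg b i).
have e : forall i, t i ^+ b i = \prod_(j < b i) t i.
  by move=> i; rewrite prodr_const card_ord.
under [X in `|_ - X|]eq_bigr => i _ do rewrite e.
apply: le_trans (prod_diff _ _ _) _.
- move=> i; apply: prod_le1 => j; have := hjM i j; have := ht i.
  move=> /andP [h1 h2] /andP [h3 h4]; rewrite ler_norml; apply/andP; split; lra.
- move=> i; apply: prod_le1 => j; have := ht i.
  move=> /andP [h1 h2]; rewrite ler_norml; apply/andP; split; lra.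
have -> : (mdeg b)%:R * (mdeg b)%:R / M = \sum_(i < n) (b i)%:R * ((mdeg b)%:R / M).
  by rewrite -big_distrl /= -natr_sum -mdegE mulrA.
apply: ler_sum => i _.
apply: le_trans (prod_diff _ _ _) _.
- move=> j; have := hjM i j; have := ht i.
  move=> /andP [h1 h2] /andP [h3 h4]; rewrite ler_norml; apply/andP; split; lra.
- move=> j; have := ht i.
  move=> /andP [h1 h2]; rewrite ler_norml; apply/andP; split; lra.
have -> : (b i)%:R * ((mdeg b)%:R / M) = \sum_(j < b i) ((mdeg b)%:R / M).
  by rewrite sumr_const card_ord mulr_natl.
apply: ler_sum => j _.
have -> : t i - j%:R / M - t i = - (j%:R / M) by ring.
rewrite normrN ger0_norm; last by rewrite divr_ge0 ?ler0n // ltW.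
apply: ler_wpM2r; first by rewrite invr_ge0 ltW.
rewrite ler_nat.
exact: leq_trans (ltnW (ltn_ord j)) (mnm_le_mdeg b i).
Qed.

End Polya.

Section Polya2.
Variable (R : archiRealFieldType) (n : nat).
Local Notation P := {mpoly R[n]}.

Lemma ffN_scale (M : R) (a b : 'X_{1..n}) : M != 0 ->
  (ffN a b)%:R = M ^+ mdeg b * \prod_(i < n) \prod_(j < b i) ((a i)%:R / M - j%:R / M).
Proof.
move=> hM; rewrite /ffN natr_prod mdegE -prodrXr -big_split /=.
apply: eq_bigr => i _; rewrite -ffR_nat.
have -> : M ^+ b i = \prod_(j < b i) M by rewrite prodr_const card_ord.
rewrite -big_split /=.
apply: eq_bigr => j _; by field.
Qed.

Lemma coef_sPN_g N (g : P) D (a : 'X_{1..n}) : hom D g -> mdeg a = (N + D)%N ->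
  (sP R n ^+ N * g)@_a * (factm a)%:R =
  (N`!)%:R * \sum_(b <- msupp g) g@_b * (ffN a b)%:R.
Proof.
move=> hg ha; rewrite {1}(mpolyE g) [sP R n ^+ N * _]mulr_sumr raddf_sum mulr_suml /= [in RHS]mulr_sumr.
apply: eq_big_seq => b hb.
have hbD : mdeg b = D.
  apply/eqP; apply/negP => /negP hne; move: hb; rewrite mcoeff_msupp hg //.
  by rewrite eqxx.
rewrite -scalerAr mcoeffZ -mulrA polya_coef; last by rewrite hbD.
by rewrite natrM; ring.
Qed.

Lemma polya (g : P) D eps : hom D g -> 0 < eps ->
  (forall a : 'X_{1..n}, (0 < mdeg a)%N ->
     eps <= meval (fun i => (a i)%:R / (mdeg a)%:R) g) ->
  exists N0, forall N, (N0 <= N)%N -> forall a : 'X_{1..n}, mdeg a = (N + D)%N ->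
    0 < (sP R n ^+ N * g)@_a.
Proof.
move=> hg heps hpos.
set C := \sum_(b <- msupp g) `|g@_b|.
have hC : 0 <= C by apply: sumr_ge0 => b _; exact: normr_ge0.
set K := C * (D%:R * D%:R) / eps.
have hK : 0 <= K by rewrite divr_ge0 ?mulr_ge0 ?ler0n // ltW.
exists (Num.Def.archi_bound K).+1 => N hN a ha.
set M : R := (N + D)%:R.
have hKM : K < M.
  apply: lt_le_trans (archi_boundP hK) _; rewrite /M ler_nat.
  by apply: leq_trans (leq_addr _ _); apply: ltnW.
have hM : 0 < M by apply: le_lt_trans hKM.
have hM0 : M != 0 by rewrite gt_eqF.
have hDM : (D%:R : R) <= M by rewrite /M ler_nat leq_addl.
have ht : forall i, 0 <= (a i)%:R / M <= 1.
  move=> i; apply/andP; split; first by rewrite divr_ge0 ?ler0n // ltW.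
  by rewrite ler_pdivrMr // mul1r /M -ha ler_nat mnm_le_mdeg.
set U := fun b : 'X_{1..n} => \prod_(i < n) \prod_(j < b i) ((a i)%:R / M - j%:R / M).
set V := fun b : 'X_{1..n} => \prod_(i < n) ((a i)%:R / M) ^+ b i.
have hD : forall b, b \in msupp g -> mdeg b = D.
  move=> b hb; apply/eqP; apply/negP => /negP hne; move: hb; rewrite mcoeff_msupp hg //.
  by rewrite eqxx.
have key : (sP R n ^+ N * g)@_a * (factm a)%:R =
           (N`!)%:R * (M ^+ D * \sum_(b <- msupp g) g@_b * U b).
  rewrite (coef_sPN_g hg ha); congr (_ * _); rewrite mulr_sumr; apply: eq_big_seq => b hb.
  by rewrite (ffN_scale _ _ hM0) (hD b hb) mulrCA.
have hV : \sum_(b <- msupp g) g@_b * V b >= eps.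
  have := hpos a; rewrite ha addn_gt0 lt0n.
  have hN0 : N != 0%N by rewrite -lt0n; apply: leq_trans hN.
  by rewrite hN0 /= mevalE => /(_ isT).
have hUV : `|\sum_(b <- msupp g) g@_b * U b - \sum_(b <- msupp g) g@_b * V b|
             <= C * (D%:R * D%:R / M).
  rewrite -sumrB /C big_distrl /=; apply: le_trans (ler_norm_sum _ _ _) _.
  rewrite big_seq [X in _ <= X]big_seq; apply: ler_sum => b hb; rewrite -mulrBr normrM.
  apply: ler_wpM2l; first exact: normr_ge0.
  rewrite -(hD b hb); apply: U_approx => //; by rewrite (hD b hb).
have hS : 0 < \sum_(b <- msupp g) g@_b * U b.
  have h1 : C * (D%:R * D%:R / M) < eps.
    rewrite mulrA ltr_pdivrMr //; move: hKM; rewrite /K ltr_pdivrMr // => h; apply: (lt_le_trans h); rewrite mulrC.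
    by rewrite mulrC.
  move: hUV; rewrite ler_norml => /andP [h2 h3]; lra.
have hpos2 : 0 < (N`!)%:R * (M ^+ D * \sum_(b <- msupp g) g@_b * U b).
  by rewrite mulr_gt0 ?ltr0n ?fact_gt0 // mulr_gt0 // exprn_gt0.
by move: hpos2; rewrite -key pmulr_lgt0 // ltr0n factm_gt0.
Qed.

End Polya2.


Section Dom.
Variable (R : archiRealFieldType) (n : nat).
Local Notation P := {mpoly R[n]}.

Lemma finite_lb (I : finType) (Q : pred I) (F : I -> R) :
  (forall i, Q i -> 0 < F i) ->
  exists c, [/\ 0 < c, c <= 1 & forall i, Q i -> c <= F i].
Proof.
move=> hF; set S := \sum_(i | Q i) (F i)^-1.
have hS : 0 <= S by apply: sumr_ge0 => i /hF h; rewrite invr_ge0 ltW.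
exists (1 + S)^-1; split.
- by rewrite invr_gt0; lra.
- by rewrite invf_le1; lra.
move=> i hi; have hFi := hF i hi.
have h : (F i)^-1 <= 1 + S.
  rewrite /S (bigD1 i) //=; have : 0 <= \sum_(j | Q j && (j != i)) (F j)^-1.
    by apply: sumr_ge0 => j /andP [/hF h _]; rewrite invr_ge0 ltW.
  lra.
rewrite -[F i]invrK lef_pV2 ?posrE ?invr_gt0 //; lra.
Qed.

Lemma lb_deg (F : 'X_{1..n} -> R) K :
  (forall a : 'X_{1..n}, mdeg a = K -> 0 < F a) ->
  exists c, [/\ 0 < c, c <= 1 & forall a : 'X_{1..n}, mdeg a = K -> c <= F a].
Proof.
move=> hF.
have [c [hc0 hc1 hc]] := @finite_lb ('X_{1..n < K.+1})
   (fun b => mdeg (bmnm b) == K) (fun b => F (bmnm b))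
   (fun b hb => hF _ (eqP hb)).
exists c; split => // a ha.
have hb : (mdeg a < K.+1)%N by rewrite ha.
exact: (hc (BMultinom hb) (introT eqP ha)).
Qed.

Lemma coef_bound (p : P) a : `|p@_a| <= \sum_(b <- msupp p) `|p@_b|.
Proof.
case: (boolP (a \in msupp p)) => ha.
  rewrite (bigD1_seq a) //= ?msupp_uniq // lerDl.
  by apply: sumr_ge0 => b _; exact: normr_ge0.
move: ha; rewrite -mcoeff_eq0 => /eqP ->; rewrite normr0.
by apply: sumr_ge0 => b _; exact: normr_ge0.
Qed.

Lemma bin_mono m i k : (i <= k)%N -> (k.*2 < m)%N -> ('C(m, i) <= 'C(m, k))%N.
Proof.
elim: k => [|k ih]; first by rewrite leqn0 => /eqP ->.
rewrite leq_eqVlt => /orP [/eqP -> //|hi] hk.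
apply: leq_trans (ih hi _) _; first lia.
rewrite -(leq_pmul2l (ltn0Sn k)) mul_bin_left.
apply: leq_mul => //; lia.
Qed.

Lemma nnegC (x : R) : 0 <= x -> nneg (x%:MP : P).
Proof. by move=> hx a; rewrite mcoeffC mulr_ge0 ?ler0n. Qed.

Lemma alg1 (F Y G : P) (x : R) k a b i :
  F ^+ (a + b) * (x%:MP * Y) ^+ i *+ k * G =
  F ^+ a * ((x ^+ i * k%:R)%:MP * (F ^+ b * Y ^+ i * G)).
Proof.
rewrite exprD exprMn -mulr_natr rmorphM rmorphXn rmorph_nat.
set u := x%:MP. ring.
Qed.

Lemma alg2 (F Y G : P) (x : R) k a i :
  F ^+ a * (x%:MP * Y) ^+ i *+ k * G =
  ((x ^+ i * k%:R)%:MP * F ^+ a) * (Y ^+ i * G).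
Proof.
rewrite exprMn -mulr_natr rmorphM rmorphXn rmorph_nat.
set u := x%:MP. ring.
Qed.

Lemma domination (f g : P) d D :
  (0 < d)%N -> hom d f -> hom D g ->
  (forall a : 'X_{1..n}, mdeg a = d -> 0 < f@_a) ->
  (exists N0, forall N, (N0 <= N)%N -> forall a : 'X_{1..n},
     mdeg a = (N + D)%N -> 0 < (sP R n ^+ N * g)@_a) ->
  exists m, (1 <= m)%N /\ nneg (f ^+ m * g).
Proof.
move=> hd hf hg hfpos [J hJ].
have nnegS : forall N, (J <= N)%N -> nneg (sP R n ^+ N * g).
  move=> N hN a; case: (eqVneq (mdeg a) (N + D)%N) => [e|ne].
    exact: ltW (hJ N hN a e).
  have hSN : hom N (sP R n ^+ N).
    by apply: (hom_eq (mul1n N)); apply: homXn; exact: hom_sP.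
  by rewrite (homM hSN hg).
set X := sP R n ^+ d.
have hX : hom d X by apply: (hom_eq (mul1n d)); apply: homXn; exact: hom_sP.
have nX : nneg X by apply: nnegXn; exact: nneg_sP.
have [c [hc0 hc1 hc]] : exists c, [/\ 0 < c, c <= 1 &
    forall a : 'X_{1..n}, mdeg a = d -> c <= f@_a / (X@_a + 1)].
  apply: lb_deg => a ha; apply: divr_gt0; first exact: hfpos.
  have := nX a; lra.
set f' := f - c%:MP * X.
have hf' : hom d f'.
  apply: homD => //; apply: homN; rewrite mul_mpolyC; exact: homZ.
have nf' : nneg f'.
  move=> a; rewrite mcoeffB mcoeffCM subr_ge0.
  case: (eqVneq (mdeg a) d) => [e|ne]; last by rewrite (hf a ne) (hX a ne) mulr0.
  have := hc a e; have := nX a => hXa.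
  rewrite ler_pdivlMr; last lra.
  rewrite mulrDr mulr1; lra.
set A := sP R n ^+ (d * J) * g.
have hdJ : (J <= d * J)%N by rewrite leq_pmull.
have [δ [hδ0 _ hδ]] := @lb_deg (fun a => A@_a) (d * J + D) (fun a ha => hJ _ hdJ a ha).
set Q := fun i : nat => f' ^+ (J - i) * X ^+ i * g.
set B := \sum_(i < J.+1) \sum_(b <- msupp (Q i)) `|(Q i)@_b|.
have hB : forall (i : nat) a, (i <= J)%N -> `|(Q i)@_a| <= B.
  move=> i a hi; apply: le_trans (coef_bound _ a) _.
  rewrite /B (bigD1 (Ordinal (hi : (i < J.+1)%N))) //= lerDl.
  by apply: sumr_ge0 => k _; apply: sumr_ge0 => b _; exact: normr_ge0.
have hB0 : 0 <= B.
  by apply: sumr_ge0 => k _; apply: sumr_ge0 => b _; exact: normr_ge0.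
have hcJ : 0 < c ^+ J * δ by rewrite mulr_gt0 // exprn_gt0.
set K := (J%:R * J%:R * B) / (c ^+ J * δ).
have hK0 : 0 <= K by apply: divr_ge0; [apply: mulr_ge0 => //; apply: mulr_ge0; exact: ler0n | exact: ltW].
set L := (maxn J (Num.Def.archi_bound K)).+1.
have hLJ : (J < L)%N by rewrite /L ltnS leq_maxl.
have hKL : K < L%:R.
  apply: lt_le_trans (archi_boundP hK0) _; rewrite ler_nat /L.
  by apply: leq_trans (leq_maxr J _) _.
exists (J + L)%N; split; first lia.
set mm := (J + L)%N.
have ef : f = f' + c%:MP * X by rewrite /f' subrK.
rewrite ef exprDn mulr_suml.
rewrite -(big_mkord (fun _ => true) (fun i => f' ^+ (mm - i) * (c%:MP * X) ^+ i *+ 'C(mm, i) * g)).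
rewrite (@big_cat_nat _ _ _ J.+1 0 mm.+1) //; last by rewrite /mm ltnS; lia.
apply: nnegD.
  have e1 : \sum_(0 <= i < J.+1)
      f' ^+ (mm - i) * (c%:MP * X) ^+ i *+ 'C(mm, i) * g =
      f' ^+ L * \sum_(0 <= i < J.+1) (c ^+ i * ('C(mm, i))%:R)%:MP * Q i.
    rewrite mulr_sumr; apply: eq_big_nat => i /andP [_ hi].
    have em : (mm - i = L + (J - i))%N by rewrite /mm; lia.
    by rewrite em alg1.
  rewrite e1; apply: nnegM; first exact: nnegXn.
  have homQ : forall i, (i <= J)%N -> hom (d * J + D) (Q i).
    move=> i hi; have := homM (homM (homXn (k := J - i) hf') (homXn (k := i) hX)) hg.
    by rewrite -mulnDr subnK.
  move=> a; case: (eqVneq (mdeg a) (d * J + D)%N) => [e|ne]; last first.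
    rewrite raddf_sum big_nat big1 // => i /andP [_ hi].
    by rewrite /= mcoeffCM homQ // mulr0.
  rewrite raddf_sum big_nat_recr //.
  rewrite (eq_bigr (fun i => c ^+ i * ('C(mm, i))%:R * (Q i)@_a)); last by move=> i _; rewrite /= mcoeffCM.
  change (0 <= \sum_(0 <= i < J) (c ^+ i * ('C(mm, i))%:R * (Q i)@_a) + ((c ^+ J * ('C(mm, J))%:R)%:MP * Q J)@_a).
  rewrite mcoeffCM.

  have eQJ : Q J = A by rewrite /Q /A subnn expr0 mul1r /X -exprM.
  rewrite eQJ.
  have hAa := hδ a e.
  case: (posnP J) => [J0|Jpos].
    rewrite J0 big_geq // add0r expr0 mul1r bin0; apply: mulr_ge0; [by rewrite ler0n | exact: le_trans (ltW hδ0) hAa].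
  set Cm := ('C(mm, J.-1))%:R : R.
  have hrest : - (Cm * B) *+ J <=
     \sum_(0 <= i < J) (c ^+ i * ('C(mm, i))%:R) * (Q i)@_a.
    have -> : - (Cm * B) *+ J = \sum_(0 <= i < J) (- (Cm * B)) by rewrite sumr_const_nat subn0.
    apply: ler_sum_nat => i /andP [_ hi].
    have hQi := hB i a (ltnW hi).
    have hci : c ^+ i <= 1 by apply: exprn_ile1; lra.
    have hci0 : 0 <= c ^+ i by apply: exprn_ge0; lra.
    have hCi : ('C(mm, i))%:R <= Cm.
      rewrite ler_nat; apply: bin_mono; [lia | rewrite /mm; lia].
    have h0 : 0 <= (('C(mm, i))%:R : R) by rewrite ler0n.
    move: hQi; rewrite ler_norml => /andP [hq1 hq2].
    have hprod : `|c ^+ i * ('C(mm, i))%:R * (Q i)@_a| <= Cm * B.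
      rewrite !normrM (ger0_norm hci0) (ger0_norm h0).
      apply: ler_pM; [by rewrite mulr_ge0 | exact: normr_ge0 | | by rewrite ler_norml hq1 hq2].
      rewrite -[Cm]mul1r; apply: ler_pM => //.
    by move: hprod; rewrite ler_norml => /andP [].
  have hbin : J%:R * ('C(mm, J))%:R = (L.+1)%:R * Cm :> R.
    rewrite /Cm -!natrM; have := mul_bin_left mm J.-1; rewrite prednK // => ->.
    by congr ((_ * _)%:R); rewrite /mm; lia.
  have hCm : 0 <= Cm by rewrite ler0n.
  have hL2 : J%:R * J%:R * B <= (L.+1)%:R * (c ^+ J * δ).
    move: hKL; rewrite /K ltr_pdivrMr // => h.
    apply: ltW; apply: lt_le_trans h _; apply: ler_wpM2r; [exact: ltW | by rewrite ler_nat].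
  have hfin : J%:R * (Cm * B) <= c ^+ J * ('C(mm, J))%:R * δ.
    have hJpos : 0 < J%:R :> R by rewrite ltr0n.
    rewrite -(ler_pM2l hJpos).
    have -> : J%:R * (c ^+ J * ('C(mm, J))%:R * δ) =
              (J%:R * ('C(mm, J))%:R) * (c ^+ J * δ) by ring.
    rewrite hbin.
    have -> : J%:R * (J%:R * (Cm * B)) = Cm * (J%:R * J%:R * B) by ring.
    have -> : (L.+1)%:R * Cm * (c ^+ J * δ) = Cm * ((L.+1)%:R * (c ^+ J * δ)) by ring.
    exact: ler_wpM2l.
  have hterm : c ^+ J * ('C(mm, J))%:R * δ <= c ^+ J * ('C(mm, J))%:R * A@_a.
    apply: ler_wpM2l => //; apply: mulr_ge0; [apply: exprn_ge0; lra | by rewrite ler0n].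
  move: hrest; rewrite mulNrn.
  have -> : Cm * B *- J = - (J%:R * (Cm * B)) by rewrite mulr_natl.
  move=> hrest.
  lra.
rewrite big_nat; apply: nneg_sum => i /andP [hi1 hi2].
have e2 : f' ^+ (mm - i) * (c%:MP * X) ^+ i *+ 'C(mm, i) * g =
   ((c ^+ i * ('C(mm, i))%:R)%:MP * f' ^+ (mm - i)) * (sP R n ^+ (d * i) * g).
  by rewrite alg2 /X -exprM.
rewrite e2; apply: nnegM; last first.
  apply: nnegS; apply: leq_trans (ltnW hi1) _; exact: leq_pmull.
apply: nnegM; last exact: nnegXn.
by apply: nnegC; apply: mulr_ge0; [apply: exprn_ge0; lra | rewrite ler0n].
Qed.

End Dom.


Section Glue.
Variable n : nat.
Local Notation P := {mpoly R[n]}.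

Definition mnm_of (w : seq nat) : 'X_{1..n} := [multinom nth 0%N w i | i < n].
Definition toM (p : rpoly) : P := \sum_(t <- p) t.1 *: 'X_[mnm_of t.2].

Lemma size_length (T : Type) (l : list T) : size l = length l.
Proof. by elim: l => //= a l ->. Qed.

Lemma nth_expo_add v w i : nth 0%N (expo_add v w) i = (nth 0%N v i + nth 0%N w i)%N.
Proof.
elim: v w i => [|a v ih] [|b w] [|i] //=; by rewrite ?addn0.
Qed.

Lemma mnm_of_add v w : mnm_of (expo_add v w) = (mnm_of v + mnm_of w)%MM.
Proof. apply/mnmP => i; by rewrite mnmDE !mnmE nth_expo_add. Qed.

Lemma toM_cat p q : toM (p ++ q) = toM p + toM q.
Proof. by rewrite /toM big_cat. Qed.

Lemma toM_pmul p q : toM (pmul p q) = toM p * toM q.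
Proof.
elim: p => [|s p ih]; first by rewrite /pmul /= /toM big_nil mul0r.
rewrite /pmul /= -/(pmul p q) toM_cat ih /toM big_cons mulrDl; congr (_ + _).
rewrite big_map mulr_sumr; apply: eq_bigr => t _ /=.
by rewrite mnm_of_add mpolyXD -scalerAl -scalerAr scalerA.
Qed.

Lemma nth_repeat0 k i : nth 0%N (repeat 0%N k) i = 0%N.
Proof. by elim: k i => [|k ih] [|i] //=. Qed.

Lemma toM_pone : toM (pone n) = 1.
Proof.
rewrite /toM /pone big_seq1 /=.
have -> : mnm_of (repeat 0%N n) = 0%MM.
  by apply/mnmP => i; rewrite mnmE mnm0E nth_repeat0.
by rewrite mpolyX0 scale1r.
Qed.

Lemma toM_ppow f m : toM (ppow n f m) = toM f ^+ m.
Proof.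
elim: m => [|m ih]; first by rewrite expr0 /= toM_pone.
by rewrite /= toM_pmul ih exprS.
Qed.

Definition wf (p : rpoly) := forall t, List.In t p -> length t.2 = n.

Lemma length_expo_add v w : length (expo_add v w) = Nat.max (length v) (length w).
Proof. by elim: v w => [|a v ih] [|b w] //=; rewrite ih. Qed.

Lemma wf_pmul p q : wf p -> wf q -> wf (pmul p q).
Proof.
move=> hp hq t; rewrite /pmul => /in_flat_map [s [hs /in_map_iff [u [<- hu]]]] /=.
by rewrite length_expo_add (hp s hs) (hq u hu) Nat.max_id.
Qed.

Lemma wf_pone : wf (pone n).
Proof. by move=> t [<-|[]] /=; rewrite repeat_length. Qed.

Lemma wf_ppow f m : wf f -> wf (ppow n f m).
Proof. move=> hf; elim: m => [|m ih] /=; [exact: wf_pone | exact: wf_pmul]. Qed.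

Lemma form_wf d p : is_form n d p -> wf p.
Proof. by move=> h t ht; case: (h t ht). Qed.

Lemma mnm_of_inj v w : length v = n -> length w = n -> mnm_of v = mnm_of w -> v = w.
Proof.
move=> hv hw e; apply: (@eq_from_nth _ 0%N); first by rewrite !size_length hv hw.
move=> i; rewrite size_length hv => hi.
have := congr1 (fun m : 'X_{1..n} => m (Ordinal hi)) e; by rewrite /= !mnmE.
Qed.

Lemma coef_toM p w : wf p -> length w = n -> coef p w = (toM p)@_(mnm_of w).
Proof.
move=> hp hw; elim: p hp => [|t p ih] hp; first by rewrite /toM big_nil mcoeff0.
have hp' : wf p by move=> u hu; apply: hp; right.
have ht : length t.2 = n by apply: hp; left.
rewrite /toM big_cons mcoeffD mcoeffZ mcoeffX -/(toM p) -ih //.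
rewrite /coef /= -/(coef p w); congr (_ + _).
case: (list_eq_dec Nat.eq_dec t.2 w) => [->|ne]; first by rewrite eqxx mulr1.
case: eqP => [e|_]; last by rewrite mulr0.
by exfalso; apply: ne; apply: mnm_of_inj.
Qed.

Lemma coef_nlen p w : wf p -> length w <> n -> coef p w = 0.
Proof.
move=> hp hw; elim: p hp => [|t p ih] hp //.
have hp' : wf p by move=> u hu; apply: hp; right.
have ht : length t.2 = n by apply: hp; left.
rewrite /coef /= -/(coef p w) ih //.
case: (list_eq_dec Nat.eq_dec t.2 w) => [e|_]; last by rewrite Rplus_0_r.
by exfalso; apply: hw; rewrite -e.
Qed.

Lemma in_In (T : eqType) (x : T) (s : seq T) : x \in s -> List.In x s.
Proof. elim: s => //= y s ih; rewrite inE => /orP [/eqP ->|/ih h]; [by left | by right]. Qed.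

Lemma expo_deg_sumn w : expo_deg w = sumn w.
Proof. by elim: w => //= a w ->. Qed.

Lemma mdeg_mnm_of w : length w = n -> mdeg (mnm_of w) = expo_deg w.
Proof.
move=> hw; rewrite mdegE expo_deg_sumn sumnE (big_nth 0%N) size_length hw big_mkord.
by apply: eq_bigr => i _; rewrite mnmE.
Qed.

Lemma hom_toM d p : is_form n d p -> hom d (toM p).
Proof.
move=> hf m hm; rewrite /toM raddf_sum /=; apply: big1_seq => t /andP [_ ht].
rewrite mcoeffZ mcoeffX; case: eqP => [e|_]; last by rewrite mulr0.
have [hl hd] := hf t (in_In ht).
by move: hm; rewrite -e mdeg_mnm_of // hd eqxx.
Qed.

Lemma spos_toM d f : is_form n d f -> strictly_pos_coefs n d f ->
  forall a : 'X_{1..n}, mdeg a = d -> 0 < (toM f)@_a.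
Proof.
move=> hf hs a ha.
set w : seq nat := tval (multinom_val a).
have hw : length w = n by rewrite -size_length size_tuple.
have ew : mnm_of w = a by apply/mnmP => i; rewrite mnmE (mnm_nth 0%N).
have hdw : expo_deg w = d by rewrite -ha -ew mdeg_mnm_of.
have := hs w hw hdw; rewrite (coef_toM (form_wf hf) hw) ew => h.
by apply/RltP.
Qed.

Lemma powE (x : R) (k : nat) : pow x k = x ^+ k.
Proof. elim: k => [|k ih] //=; by rewrite exprS ih. Qed.

Lemma mono_eval_prod k (w : seq nat) (x : seq R) : length w = k -> length x = k ->
  mono_eval w x = \prod_(i < k) (nth 0 x i) ^+ (nth 0%N w i).
Proof.
elim: k w x => [|k ih] [|a w] [|b x] //= hw hx; first by rewrite big_ord0.
rewrite big_ord_recl /= ih; [by rewrite powE | by case: hw | by case: hx].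
Qed.

Lemma eval_toM p (v : 'I_n -> R) : wf p ->
  eval p [seq v i | i <- enum 'I_n] = meval v (toM p).
Proof.
set x := [seq v i | i <- enum 'I_n].
have hx : length x = n by rewrite -size_length size_map size_enum_ord.
have hxi : forall i : 'I_n, nth 0 x i = v i.
  by move=> i; rewrite (nth_map i) ?size_enum_ord // nth_ord_enum.
elim: p => [|t p ih] hp; first by rewrite /toM big_nil meval0.
have hp' : wf p by move=> u hu; apply: hp; right.
have ht : length t.2 = n by apply: hp; left.
rewrite /toM big_cons mevalD mevalZ mevalX -/(toM p) -ih //.
rewrite /eval /= -/(eval p x); congr (_ + _); congr (_ * _).
rewrite (mono_eval_prod ht hx); apply: eq_bigr => i _; by rewrite hxi mnmE.
Qed.

End Glue.

Lemma coef_ne0_in p w : coef p w <> 0 -> exists t, List.In t p /\ t.2 = w.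
Proof.
elim: p => [|t p ih] //=.
rewrite /coef /= -/(coef p w).
case: (list_eq_dec Nat.eq_dec t.2 w) => [e|_] h; first by exists t; split; [left|].
have [u [hu e]] : exists u, List.In u p /\ u.2 = w.
  by apply: ih => h0; apply: h; rewrite h0 Rplus_0_r.
by exists u; split; [right|].
Qed.

Lemma sumR_big (l : seq R) : sumR l = \sum_(y <- l) y.
Proof. elim: l => [|a l ih]; first by rewrite big_nil. by rewrite big_cons -ih. Qed.

Lemma main_glue n df dg f g : is_form n df f -> is_form n dg g -> nonconstant n f ->
  strictly_pos_coefs n df f -> (forall x, in_Rplus_nonzero n x -> Rlt 0 (eval g x)) ->
  exists m : nat, (1 <= m)%N /\ nonneg_coefs (pmul (ppow n f m) g).
Proof.
move=> hf hg [w [hw [hdeg hc]]] hs hpos.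
have hn1 : (1 <= n)%coq_nat.
  case: n hf hg hpos hs w hw hdeg hc => [|k]; last by move=> *; lia.
  by move=> _ _ _ _ [|a w] //= _; rewrite /expo_deg.
have hdf : (0 < df)%N.
  have [t [ht e]] := coef_ne0_in hc.
  have [_ hd] := hf t ht; move: hdeg; rewrite -e hd => h; lia.
have [eps [heps hbd]] := unif_pos n g hn1 hpos.
have hpol : exists N0, forall N, (N0 <= N)%N -> forall a : 'X_{1..n},
     mdeg a = (N + dg)%N -> 0 < (sP R n ^+ N * toM n g)@_a.
  apply: (polya (hom_toM hg) (eps := eps)); first by apply/RltP.
  move=> a ha; rewrite -eval_toM; last exact: form_wf hg.
  set v := fun i : 'I_n => (a i)%:R / (mdeg a)%:R : R.
  have hM : (mdeg a)%:R != 0 :> R by rewrite pnatr_eq0 -lt0n.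
  apply/RleP; apply: hbd.
  - by rewrite -size_length size_map size_enum_ord.
  - apply/Forall_forall => y /in_map_iff [i [<- _]]; apply/RleP.
    by rewrite /v divr_ge0 ?ler0n.
  - rewrite sumR_big big_map big_enum /= /v -mulr_suml -natr_sum -mdegE divff //.
have [m [hm hnn]] := domination hdf (hom_toM hf) (hom_toM hg) (spos_toM hf hs) hpol.
exists m; split => // u.
have hwf : wf n (pmul (ppow n f m) g) := wf_pmul (wf_ppow (m := m) (form_wf hf)) (form_wf hg).
case: (Nat.eq_dec (length u) n) => [hu|hu].
  rewrite (coef_toM hwf hu) toM_pmul toM_ppow; apply/RleP; exact: hnn.
rewrite (coef_nlen hwf hu); exact: Rle_refl.
Qed.

End MCPart.

Theorem lemma5p1 (n df dg : nat) (f g : rpoly) :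
  is_form n df f -> is_form n dg g ->
  nonconstant n f ->
  strictly_pos_coefs n df f ->
  (forall x, in_Rplus_nonzero n x -> 0 < eval g x) ->
  Nat.divide df dg ->
  exists m : nat, (1 <= m)%nat /\ nonneg_coefs (pmul (ppow n f m) g).
Proof.
  intros hf hg hnc hs hpos _.
  destruct (MCPart.main_glue hf hg hnc hs hpos) as [m [hm h]].
  exists m. split.
  { destruct m as [|m]. { discriminate hm. } apply le_n_S, le_0_n. }
  exact h.
Qed.
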